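(* Let $(r_{i,j})_{i\ge 0,\, j\in\mathbb{Z}}$ be the Pascal rhombus, defined by $r_{0,0}=r_{1,-1}=r_{1,0}=r_{1,1}=1$, $r_{0,j}=0$ for $j\neq 0$, $r_{1,j}=0$ for $j\notin\{-1,0,1\}$, and $$r_{i,j}=r_{i-1,j-1}+r_{i-1,j}+r_{i-1,j+1}+r_{i-2,j}\quad (i\ge 2,\ j\in\mathbb{Z}).$$ For $n\ge 0$ and $j\in\mathbb{Z}$, let $g^{(2)}_{n,j}$ be the number of 2-generalized grand Motzkin paths of length $n$ and height $j$. Then $r_{n,j}=g^{(2)}_{n,j}$ for all $n\ge 0$, $j\in\mathbb{Z}$.
   Context: A 2-generalized grand Motzkin path of length $n$ is a lattice path in $\mathbb{Z}\times\mathbb{Z}$ starting at $(0,0)$ and ending at a point with $x$-coordinate $n$, using steps $U=(1,1)$, $D=(1,-1)$, $H=(1,0)$ and $H_2=(2,0)$, with no restriction of staying above the $x$-axis. Its height is its final $y$-coordinate. *)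

(* Defs.v *)
From Stdlib Require Import Bool ZArith List Lia.
Import ListNotations.
Open Scope Z_scope.

Inductive step := U | D | H | H2.

Definition all_steps : list step := [U; D; H; H2].

Definition dx (s : step) : nat := match s with U | D | H => 1%nat | H2 => 2%nat end.
Definition dy (s : step) : Z := match s with U => 1 | D => -1 | H | H2 => 0 end.

Definition path_length (p : list step) : nat := fold_right (fun s a => (dx s + a)%nat) 0%nat p.
Definition path_height (p : list step) : Z := fold_right (fun s a => dy s + a) 0 p.

Fixpoint all_lists (k : nat) : list (list step) :=
  match k with
  | O => [[]]
  | S k' => flat_map (fun s => map (cons s) (all_lists k')) all_steps
  end.

(* every path of length n has at most n steps (each step has dx >= 1);
   all_lists k enumerates every sequence of k steps exactly once *)
Definition all_paths_upto (n : nat) : list (list step) :=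
  flat_map all_lists (seq 0 (S n)).

Definition gmotzkin2 (n : nat) (j : Z) : nat :=
  length (filter (fun p => Nat.eqb (path_length p) n && Z.eqb (path_height p) j)%bool
                 (all_paths_upto n)).

(* Pascal rhombus: rows i and i+1 computed together *)
Fixpoint rhombus_pair (i : nat) : (Z -> nat) * (Z -> nat) :=
  match i with
  | O => (fun j => if Z.eqb j 0 then 1%nat else 0%nat,
          fun j => if (Z.leb (-1) j && Z.leb j 1)%bool then 1%nat else 0%nat)
  | S i' => let (a, b) := rhombus_pair i' in
            (b, fun j : Z => (b (j - 1)%Z + b j + b (j + 1)%Z + a j)%nat)
  end.

Definition rhombus (i : nat) (j : Z) : nat := fst (rhombus_pair i) j.

Lemma rhombus_rec (i : nat) (j : Z) :
  rhombus (S (S i)) j =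
  (rhombus (S i) (j - 1) + rhombus (S i) j + rhombus (S i) (j + 1) + rhombus i j)%nat.
Proof.
  unfold rhombus. simpl. destruct (rhombus_pair i) as [a b]. simpl. reflexivity.
Qed.

(* Main.v *)
Require Import Defs.
From Stdlib Require Import ZArith.
From Stdlib Require Import List Lia Bool.
Import ListNotations.

Definition Pr (n : nat) (j : Z) (p : list step) : bool :=
  (Nat.eqb (path_length p) n && Z.eqb (path_height p) j)%bool.

Definition cnt (k n : nat) (j : Z) : nat := length (filter (Pr n j) (all_lists k)).

Fixpoint sumk (M : nat) (f : nat -> nat) : nat :=
  match M with O => O | S m => (sumk m f + f m)%nat end.

Lemma sumk_shift M f : sumk (S M) f = (f O + sumk M (fun k => f (S k)))%nat.
Proof. induction M; simpl in *; [lia|]. rewrite IHM. lia. Qed.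

Lemma sumk_plus M f g : sumk M (fun k => f k + g k)%nat = (sumk M f + sumk M g)%nat.
Proof. induction M; simpl; [lia|]. rewrite IHM. lia. Qed.

Lemma sumk_ext M f g : (forall k, f k = g k) -> sumk M f = sumk M g.
Proof. intros E; induction M; simpl; [lia|]. rewrite IHM, E. lia. Qed.

Lemma sumk_zero n M f : (n <= M)%nat -> (forall k, (n <= k)%nat -> f k = O) ->
  sumk M f = sumk n f.
Proof.
  intros HM Z0. induction M; simpl.
  - assert (n = O) by lia. subst. reflexivity.
  - destruct (Nat.eq_dec n (S M)) as [->|Hn]; [reflexivity|].
    rewrite IHM by lia. rewrite Z0 by lia. lia.
Qed.

Lemma sumk_seq M f : list_sum (map f (seq 0 M)) = sumk M f.
Proof.
  induction M; [reflexivity|]. rewrite seq_S, map_app, list_sum_app. simpl.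
  rewrite IHM. lia.
Qed.

Lemma len_filter_flat_map {A B} (P : B -> bool) (f : A -> list B) l :
  length (filter P (flat_map f l)) = list_sum (map (fun x => length (filter P (f x))) l).
Proof.
  induction l; simpl; [reflexivity|]. rewrite filter_app, length_app, IHl. reflexivity.
Qed.

Lemma in_all_lists k p : In p (all_lists k) -> length p = k.
Proof.
  revert p; induction k; intros p Hp.
  - destruct Hp as [<-|[]]; reflexivity.
  - change (In p (flat_map (fun s => map (cons s) (all_lists k)) all_steps)) in Hp.
    apply in_flat_map in Hp. destruct Hp as [s [_ Hs]].
    apply in_map_iff in Hs. destruct Hs as [q [<- Hq]]. simpl. rewrite (IHk q Hq). reflexivity.
Qed.

Lemma len_le_pl p : (length p <= path_length p)%nat.
Proof. induction p as [|s p IH]; simpl; [lia|]. destruct s; simpl; lia. Qed.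

Lemma filter_none {A} (P : A -> bool) l : (forall x, In x l -> P x = false) -> filter P l = [].
Proof.
  induction l; simpl; intros H; [reflexivity|]. rewrite H by auto. apply IHl. auto.
Qed.

Lemma cnt_zero k n j : (n < k)%nat -> cnt k n j = O.
Proof.
  intros Hk. unfold cnt. rewrite filter_none; [reflexivity|].
  intros p Hp. apply in_all_lists in Hp. pose proof (len_le_pl p).
  unfold Pr. destruct (Nat.eqb_spec (path_length p) n); [lia|reflexivity].
Qed.

Lemma len_filter_map_cons (P : list step -> bool) s L :
  length (filter P (map (cons s) L)) = length (filter (fun p => P (s :: p)) L).
Proof. induction L; simpl; [reflexivity|]. destruct (P (s :: a)); simpl; rewrite IHL; reflexivity. Qed.

Lemma len_filter_ext {A} (P Q : A -> bool) L : (forall x, P x = Q x) ->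
  length (filter P L) = length (filter Q L).
Proof. intros E. rewrite (filter_ext P Q E). reflexivity. Qed.

Lemma pl_cons s p : path_length (s :: p) = (dx s + path_length p)%nat.
Proof. reflexivity. Qed.
Lemma ph_cons s p : path_height (s :: p) = (dy s + path_height p)%Z.
Proof. reflexivity. Qed.

Lemma cnt_S2 k n j : cnt (S k) (S (S n)) j =
  (cnt k (S n) (j - 1) + cnt k (S n) (j + 1) + cnt k (S n) j + cnt k n j)%nat.
Proof.
  unfold cnt. change (all_lists (S k)) with (flat_map (fun s => map (cons s) (all_lists k)) all_steps).
  rewrite len_filter_flat_map. simpl.
  rewrite !len_filter_map_cons.
  rewrite (len_filter_ext (fun p => Pr (S (S n)) j (U :: p)) (Pr (S n) (j-1))).
  2:{ intros p; unfold Pr; rewrite pl_cons, ph_cons; cbn [dx dy];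
  repeat match goal with |- context [Nat.eqb ?a ?b] => destruct (Nat.eqb_spec a b) end;
  repeat match goal with |- context [Z.eqb ?a ?b] => destruct (Z.eqb_spec a b) end;
  simpl; try reflexivity; lia. }
  rewrite (len_filter_ext (fun p => Pr (S (S n)) j (D :: p)) (Pr (S n) (j+1))).
  2:{ intros p; unfold Pr; rewrite pl_cons, ph_cons; cbn [dx dy];
  repeat match goal with |- context [Nat.eqb ?a ?b] => destruct (Nat.eqb_spec a b) end;
  repeat match goal with |- context [Z.eqb ?a ?b] => destruct (Z.eqb_spec a b) end;
  simpl; try reflexivity; lia. }
  rewrite (len_filter_ext (fun p => Pr (S (S n)) j (H :: p)) (Pr (S n) j)).
  2:{ intros p; unfold Pr; rewrite pl_cons, ph_cons; cbn [dx dy];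
  repeat match goal with |- context [Nat.eqb ?a ?b] => destruct (Nat.eqb_spec a b) end;
  repeat match goal with |- context [Z.eqb ?a ?b] => destruct (Z.eqb_spec a b) end;
  simpl; try reflexivity; lia. }
  rewrite (len_filter_ext (fun p => Pr (S (S n)) j (H2 :: p)) (Pr n j)).
  2:{ intros p; unfold Pr; rewrite pl_cons, ph_cons; cbn [dx dy];
  repeat match goal with |- context [Nat.eqb ?a ?b] => destruct (Nat.eqb_spec a b) end;
  repeat match goal with |- context [Z.eqb ?a ?b] => destruct (Z.eqb_spec a b) end;
  simpl; try reflexivity; lia. }
  lia.
Qed.

Definition T (n : nat) (j : Z) : nat := sumk (S n) (fun k => cnt k n j).

Lemma T_any n M j : (S n <= M)%nat -> sumk M (fun k => cnt k n j) = T n j.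
Proof. intros HM. apply sumk_zero; auto. intros k Hk. apply cnt_zero. lia. Qed.

Lemma gm_T n j : gmotzkin2 n j = T n j.
Proof.
  unfold gmotzkin2, all_paths_upto. rewrite len_filter_flat_map, sumk_seq. reflexivity.
Qed.

Lemma T_rec n j : T (S (S n)) j =
  (T (S n) (j - 1) + T (S n) (j + 1) + T (S n) j + T n j)%nat.
Proof.
  unfold T at 1. rewrite sumk_shift.
  replace (cnt 0 (S (S n)) j) with O by reflexivity.
  rewrite (sumk_ext _ _ (fun k => (cnt k (S n) (j - 1) + cnt k (S n) (j + 1) + cnt k (S n) j) + cnt k n j)%nat)
    by (intros; apply cnt_S2).
  rewrite !sumk_plus. rewrite !T_any by lia. lia.
Qed.

Lemma T0 j : rhombus 0 j = T 0 j.
Proof.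
  unfold rhombus, T, cnt, Pr; simpl. destruct (Z.eqb_spec j 0); subst; [reflexivity|].
  destruct j; try lia; reflexivity.
Qed.

Lemma T1 j : rhombus 1 j = T 1 j.
Proof.
  destruct j as [|[q|q|]|[q|q|]]; reflexivity.
Qed.

Theorem theorem2p3 : forall (n : nat) (j : Z), rhombus n j = gmotzkin2 n j.
Proof.
  assert (forall n, (forall j, rhombus n j = T n j) /\ (forall j, rhombus (S n) j = T (S n) j)).
  { induction n as [|n [IH1 IH2]].
    - split; [apply T0|apply T1].
    - split; [exact IH2|]. intros j. rewrite rhombus_rec, T_rec, !IH2, IH1. lia. }
  intros n j. rewrite gm_T. apply H.
Qed.
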